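(* Let $(\star)$ be a linear system over $\mathbb{F}_q$ in $k$ variables, and suppose that $(\star)$ is equivalent to a linear system $(\star')$ whose coefficient matrix (after reordering the variables) has the block form $\begin{pmatrix}A_1&0\\0&A_2\end{pmatrix}$ with $A_1\in\mathbb{F}_q^{m_1\times k_1}$, $A_2\in\mathbb{F}_q^{m_2\times k_2}$ and $m_1,m_2,k_1,k_2\ne0$. Then $(\star)$ is moderate if and only if the systems with coefficient matrices $A_1$ and $A_2$ are both moderate.
   Context: A linear system with coefficient matrix $A=(a_{ij})\in\mathbb{F}_q^{m\times k}$ has solutions $(x_1,\dots,x_k)\in(\mathbb{F}_q^n)^k$ with $\sum_j a_{ij}x_j=0$ for all $i$. Two systems are equivalent if each equation of one is a linear combination of the equations of the other. A $(\star)$-shape is a solution with $x_1,\dots,x_k$ pairwise distinct. A system is moderate if there exist constants $\beta,\gamma>0$ with $\gamma<q$ such that for every $n$, every $S\subseteq\mathbb{F}_q^n$ with $|S|\ge\beta\gamma^n$ contains a shape $(x_1,\dots,x_k)\in S^k$. *)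

(* Defs.v *)
From HB Require Import structures.
From mathcomp Require Import all_boot all_order all_algebra all_fingroup all_field.
From mathcomp Require Import reals.
Set Implicit Arguments. Unset Strict Implicit. Unset Printing Implicit Defensive.
Import Order.TTheory GRing.Theory Num.Theory.
Local Open Scope ring_scope.

Definition is_solution (F : fieldType) (m k n : nat) (A : 'M[F]_(m, k))
  (x : 'I_k -> 'rV[F]_n) : Prop :=
  forall i : 'I_m, \sum_(j < k) A i j *: x j = 0.

Definition is_shape (F : fieldType) (m k n : nat) (A : 'M[F]_(m, k))
  (x : 'I_k -> 'rV[F]_n) : Prop :=
  is_solution A x /\ injective x.

Definition moderate (R : realType) (F : finFieldType) (m k : nat)
  (A : 'M[F]_(m, k)) : Prop :=
  exists beta gamma : R,
    [/\ 0 < beta, 0 < gamma, gamma < #|F|%:R &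
      forall (n : nat) (S : {set 'rV[F]_n}),
        beta * gamma ^+ n <= #|S|%:R ->
        exists x : 'I_k -> 'rV[F]_n, (forall j, x j \in S) /\ is_shape A x].

Definition equiv_sys (F : fieldType) (m m' k : nat)
  (A : 'M[F]_(m, k)) (B : 'M[F]_(m', k)) : Prop :=
  (exists C : 'M[F]_(m, m'), A = C *m B) /\
  (exists D : 'M[F]_(m', m), B = D *m A).

(* Main.v *)
Require Import Defs.
From HB Require Import structures.
From mathcomp Require Import all_boot all_order all_algebra all_fingroup all_field.
From mathcomp Require Import reals.
Import Order.TTheory GRing.Theory Num.Theory.
Local Open Scope ring_scope.

Section Aux.
Variable F : fieldType.

Definition Xm {k n} (x : 'I_k -> 'rV[F]_n) : 'M[F]_(k, n) := \matrix_(j < k) x j.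

Lemma sol_mx m k n (A : 'M[F]_(m, k)) (x : 'I_k -> 'rV[F]_n) :
  is_solution A x <-> A *m Xm x = 0.
Proof.
have E : forall i, row i (A *m Xm x) = \sum_(j < k) A i j *: x j.
  move=> i; rewrite row_mul mulmx_sum_row.
  by apply: eq_bigr => j _; rewrite rowK mxE.
split.
  by move=> H; apply/row_matrixP => i; rewrite E row0 H.
by move=> H i; rewrite -E H row0.
Qed.

Lemma equiv_mx m m' k n (A : 'M[F]_(m, k)) (B : 'M[F]_(m', k)) (X : 'M[F]_(k, n)) :
  equiv_sys A B -> (A *m X = 0 <-> B *m X = 0).
Proof.
move=> [[C HC] [D HD]]; split => H.
  by rewrite HD -mulmxA H mulmx0.
by rewrite HC -mulmxA H mulmx0.
Qed.

Lemma key m1 m2 k1 k2 n (A1 : 'M[F]_(m1, k1)) (A2 : 'M[F]_(m2, k2))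
  (s : 'S_(k1 + k2)) (y : 'I_(k1 + k2) -> 'rV[F]_n) :
  col_perm s (block_mx A1 0 0 A2) *m Xm (fun j => y (s j)) = 0 <->
  (A1 *m Xm (fun j => y (lshift k2 j)) = 0 /\ A2 *m Xm (fun j => y (rshift k1 j)) = 0).
Proof.
have -> : col_perm s (block_mx A1 0 0 A2) *m Xm (fun j => y (s j))
          = block_mx A1 0 0 A2 *m Xm y.
  rewrite col_permE -mulmxA -row_permE; congr (_ *m _).
  by apply/matrixP => i j; rewrite !mxE permKV.
have -> : Xm y = col_mx (Xm (fun j => y (lshift k2 j))) (Xm (fun j => y (rshift k1 j))).
  rewrite -[Xm y]vsubmxK; congr col_mx; apply/matrixP => i j; rewrite !mxE //.
rewrite mul_block_col !mul0mx addr0 add0r.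
split.
  by move/eqP; rewrite col_mx_eq0 => /andP[/eqP -> /eqP ->].
by move=> [-> ->]; apply/eqP; rewrite col_mx_eq0 !eqxx.
Qed.

End Aux.
Arguments equiv_mx {F m m' k n A B} X.

From mathcomp Require Import lra.

Lemma sol_ext (F : fieldType) m k n (A : 'M[F]_(m, k)) (x x' : 'I_k -> 'rV[F]_n) :
  is_solution A x -> (forall j, x j = x' j) -> is_solution A x'.
Proof. by move=> H E i; rewrite -[RHS](H i); apply: eq_bigr => j _; rewrite E. Qed.

Theorem proposition2p2 (R : realType) (F : finFieldType)
  (m m1 m2 k1 k2 : nat) (A : 'M[F]_(m, k1 + k2))
  (A1 : 'M[F]_(m1, k1)) (A2 : 'M[F]_(m2, k2)) :
  (0 < m1)%N -> (0 < m2)%N -> (0 < k1)%N -> (0 < k2)%N ->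
  (exists s : 'S_(k1 + k2),
      equiv_sys A (col_perm s (block_mx A1 0 0 A2))) ->
  moderate R A <-> (moderate R A1 /\ moderate R A2).
Proof.
move=> _ _ _ _ [s Hs].
have KA : forall n (y : 'I_(k1 + k2) -> 'rV[F]_n),
    is_solution A (fun j => y (s j)) <->
    (is_solution A1 (fun j => y (lshift k2 j)) /\
     is_solution A2 (fun j => y (rshift k1 j))).
  move=> n y; split.
    move/sol_mx/(equiv_mx _ Hs)/key => [H1 H2].
    by split; apply/sol_mx.
  move=> [/sol_mx H1 /sol_mx H2]; apply/sol_mx/(equiv_mx _ Hs)/key; by split.
split.
  move=> [b [g [b0 g0 gq HA]]].
  have P : forall n (S : {set 'rV[F]_n}), b * g ^+ n <= #|S|%:R ->
      exists y : 'I_(k1 + k2) -> 'rV[F]_n, (forall j, y j \in S) /\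
        injective y /\ is_solution A (fun j => y (s j)).
    move=> n S HS; have [x [xS [solx injx]]] := HA n S HS.
    exists (fun j => x (s^-1 j))%g; split; first by move=> j; apply: xS.
    split; first by move=> i j /injx /perm_inj.
    by eapply sol_ext; [exact: solx|] => j; rewrite permK.
  split; exists b, g; split=> // n S HS; have [y [yS [iy /KA [sy1 sy2]]]] := P n S HS.
    exists (fun j => y (lshift k2 j)); split=> //; split=> //.
    by move=> i j /iy /lshift_inj.
  exists (fun j => y (rshift k1 j)); split=> //; split=> //.
  by move=> i j /iy /rshift_inj.
move=> [[b1 [g1 [b10 g10 g1q H1]]] [b2 [g2 [b20 g20 g2q H2]]]].
have q1 : 1 < #|F|%:R :> R by rewrite ltr1n card_finNzRing_gt1.
set g := Num.max 1 (Num.max g1 g2).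
have gg1 : g1 <= g by rewrite /g !le_max lexx orbT.
have gg2 : g2 <= g by rewrite /g !le_max lexx !orbT.
have g1' : 1 <= g by rewrite /g !le_max lexx.
exists (b1 + b2 + k1%:R), g; split.
- have : 0 <= k1%:R :> R by rewrite ler0n.
  lra.
- lra.
- by rewrite /g !gt_max q1 g1q g2q.
move=> n S HS.
have p1 : 1 <= g ^+ n := exprn_ege1 n g1'.
have e1 : g1 ^+ n <= g ^+ n by apply: lerXn2r; rewrite // nnegrE; lra.
have e2 : g2 ^+ n <= g ^+ n by apply: lerXn2r; rewrite // nnegrE; lra.
have f1 : b1 * g1 ^+ n <= b1 * g ^+ n by apply: ler_wpM2l => //; lra.
have f2 : b2 * g2 ^+ n <= b2 * g ^+ n by apply: ler_wpM2l => //; lra.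
have k0 : 0 <= k1%:R :> R by rewrite ler0n.
have f3 : k1%:R <= k1%:R * g ^+ n :> R by rewrite ler_peMr.
have f4 : 0 <= b1 * g ^+ n by rewrite mulr_ge0 //; lra.
have f5 : 0 <= b2 * g ^+ n by rewrite mulr_ge0 //; lra.
have f6 : 0 <= b2 * g2 ^+ n by rewrite mulr_ge0 // ?exprn_ge0; lra.
have ee : (b1 + b2 + k1%:R) * g ^+ n = b1 * g ^+ n + b2 * g ^+ n + k1%:R * g ^+ n.
  by rewrite !mulrDl.
rewrite ee in HS.
have HS1 : b1 * g1 ^+ n <= #|S|%:R by lra.
have [x1 [x1S [sol1 inj1]]] := H1 n S HS1.
set X := [set x1 a | a : 'I_k1].
set S' := S :\: X.
have cS : (#|S| <= #|S'| + k1)%N.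
  rewrite -(cardsID X S) addnC leq_add2l.
  apply: (leq_trans (subset_leq_card (subsetIr S X))).
  by apply: (leq_trans (leq_imset_card _ _)); rewrite card_ord.
have cSR : #|S|%:R <= #|S'|%:R + k1%:R :> R by rewrite -natrD ler_nat.
have HS2 : b2 * g2 ^+ n <= #|S'|%:R by lra.
have [x2 [x2S [sol2 inj2]]] := H2 n S' HS2.
pose y := fun j : 'I_(k1 + k2) => match split j with inl a => x1 a | inr b => x2 b end.
have yl : forall a, y (lshift k2 a) = x1 a by move=> a; rewrite /y (unsplitK (inl _ a)).
have yr : forall a, y (rshift k1 a) = x2 a by move=> a; rewrite /y (unsplitK (inr _ a)).
have x2X : forall a b, x2 b != x1 a.
  move=> a b; apply/eqP => E; move: (x2S b); rewrite in_setD E.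
  by rewrite imset_f.
have iy : injective y.
  move=> i j; rewrite /y.
  case: (split_ordP i) => a ->; case: (split_ordP j) => b ->.
  - by move/inj1 ->.
  - by move=> E; move: (x2X a b); rewrite E eqxx.
  - by move=> E; move: (x2X b a); rewrite E eqxx.
  - by move/inj2 ->.
exists (fun j => y (s j)); split.
  move=> j; rewrite /y; case: split => a; first exact: x1S.
  by move: (x2S a); rewrite in_setD => /andP[_ ->].
split; last by move=> i j /iy /perm_inj.
apply/KA; split.
  by eapply sol_ext; [exact: sol1|] => j; rewrite yl.
by eapply sol_ext; [exact: sol2|] => j; rewrite yr.
Qed.
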